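(* Let $H$ be a $k$-graph on vertex set $[n]$ ($n$ divisible by $q$) and let $r=r(n)\ll n^{k-3/2}$. Let $\sigma_1,\dots,\sigma_r$ be independent uniformly random permutations of $[n]$ and $D_i=D_{\sigma_i}$. Then with probability $1-o(n^{-1})$, for every $t$ with $1\le t\le 2q-k$, every set $S$ of $k+t$ vertices is condensed in at most $4q+1$ of the $D_i$.
   Context: Fixed integers $k,\ell$ with $1\le\ell<k/2$; $z=\lceil(k-\ell)/\ell\rceil$, $q=\ell z$. $a_n\ll b_n$ means $b_n/a_n\to\infty$. For ordered $q$-tuples $\mathbf v_1=(v_1,\dots,v_q)$, $\mathbf v_2=(v_{q+1},\dots,v_{2q})$ let $e_i(\mathbf v_1,\mathbf v_2)=\{v_{i\ell+1},\dots,v_{i\ell+k}\}$, $i=0,\dots,z-1$; $\mathbf v_1$ precedes $\mathbf v_2$ if all these are edges of $H$, and then $(\mathbf v_1,\mathbf v_2)$ owns these $z$ edges. For a permutation $\sigma$ of $[n]$, $D_\sigma$ has vertex set $\{(\sigma((i-1)q+1),\dots,\sigma(iq)):i\le n/q\}$ and an arc $\mathbf v\to\mathbf w$ ($\mathbf v\ne\mathbf w$) iff $\mathbf v$ precedes $\mathbf w$. Each edge $e$ of $H$ is owned by at most one arc $u_i(e)$ of $D_i$; if it exists, $\phi_i(e)$ denotes the set of $z$ edges owned by $u_i(e)$ (so $e\in\phi_i(e)$). A set $S$ of $k+t$ vertices is condensed in $D_i$ if there exist edges $e_1\neq e_2$ of $H$ with $S=e_1\cup e_2$ and $\phi_i(e_1)\cap\phi_i(e_2)\neq\emptyset$.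 *)

(* Defs.v *)
From HB Require Import structures.
From mathcomp Require Import all_boot all_order all_algebra all_fingroup.
From mathcomp Require Import reals.
Set Implicit Arguments. Unset Strict Implicit. Unset Printing Implicit Defensive.
Import Order.TTheory GRing.Theory Num.Theory.

(* Parameters: k, l with 1 <= l < k/2;  z = ceil((k-l)/l), q = l*z. *)
Definition zpar (k l : nat) : nat := (k - l + l.-1) %/ l.
Definition qpar (k l : nat) : nat := l * zpar k l.

Section Construction.
Variables (k l n : nat).
Variable H : {set {set 'I_n}}.

Definition kgraph : bool := [forall e in H, #|e| == k].

(* the sequence sigma(1), ..., sigma(n) (0-indexed: sigma 0, ..., sigma (n-1)) *)
Definition perm_seq (s : {perm 'I_n}) : seq 'I_n := [seq s x | x <- enum 'I_n].

(* the i-th vertex of D_sigma (0-indexed), the q-tuple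
   (sigma(i q + 1), ..., sigma((i+1) q)) in 1-indexed notation *)
Definition block (s : {perm 'I_n}) (i : nat) : seq 'I_n :=
  take (qpar k l) (drop (i * qpar k l) (perm_seq s)).

Definition eseg (v1 v2 : seq 'I_n) (m : nat) : {set 'I_n} :=
  [set x | x \in take k (drop (m * l) (v1 ++ v2))].

Definition precedes (v1 v2 : seq 'I_n) : bool :=
  [forall m : 'I_(zpar k l), eseg v1 v2 m \in H].

(* vertices of D_sigma are indexed by 'I_(n %/ q); distinct indices give
   distinct tuples. Arc i -> j iff i <> j and block i precedes block j. *)
Definition arc (s : {perm 'I_n}) (i j : 'I_(n %/ qpar k l)) : bool :=
  (i != j) && precedes (block s i) (block s j).

Definition owned (s : {perm 'I_n}) (i j : 'I_(n %/ qpar k l)) : {set {set 'I_n}} :=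
  if arc s i j then [set eseg (block s i) (block s j) m | m : 'I_(zpar k l)]
  else set0.

Definition owns (s : {perm 'I_n}) (i j : 'I_(n %/ qpar k l)) (e : {set 'I_n}) : bool :=
  e \in owned s i j.

(* phi_sigma(e): the edges owned by the (at most one) arc owning e *)
Definition phi (s : {perm 'I_n}) (e : {set 'I_n}) : {set {set 'I_n}} :=
  \bigcup_(a : 'I_(n %/ qpar k l) * 'I_(n %/ qpar k l) | owns s a.1 a.2 e)
     owned s a.1 a.2.

Definition condensed (s : {perm 'I_n}) (S : {set 'I_n}) : bool :=
  [exists e1 in H, exists e2 in H,
     [&& e1 != e2, S == e1 :|: e2 & phi s e1 :&: phi s e2 != set0]].

Definition bad (r : nat) (sg : {ffun 'I_r -> {perm 'I_n}}) : bool :=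
  [exists t : 'I_(2 * qpar k l - k).+1, exists S : {set 'I_n},
     [&& 1 <= t, #|S| == k + t
       & 4 * qpar k l + 1 < #|[set i : 'I_r | condensed (sg i) S]| ]].
End Construction.

Definition prob_bad (R : numFieldType) (k l n : nat) (H : {set {set 'I_n}})
    (r : nat) : R :=
  #|[set sg : {ffun 'I_r -> {perm 'I_n}} | bad k l H sg]|%:R /
  #|{ffun 'I_r -> {perm 'I_n}}|%:R.

(* Main.v *)
Require Import Defs.
From HB Require Import structures.
From mathcomp Require Import all_boot all_order all_algebra all_fingroup.
From mathcomp Require Import reals.
From mathcomp Require Import zify ring lra.
Set Implicit Arguments. Unset Strict Implicit. Unset Printing Implicit Defensive.
Lemma qfacts k l : 1 <= l -> 2 * l < k ->
  [/\ 0 < qpar k l, qpar k l < k, k - l <= qpar k l &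
   forall m, m < zpar k l -> m * l + k <= 2 * qpar k l /\ m * l < qpar k l].
Proof.
move=> hl hk; rewrite /qpar /zpar.
set a := k - l + l.-1.
have ha : a = a %/ l * l + a %% l := divn_eq a l.
have hr : a %% l < l := ltn_pmod a hl.
set d := a %/ l in ha *.
have ea : a = k - 1 by rewrite /a; lia.
set r := a %% l in ha hr.
clearbody d r a.
split; try nia.

Qed.
Lemma take_drop_nth (T : eqType) (x0 : T) (L : seq T) a b p :
  p < b -> a + p < size L -> nth x0 L (a + p) \in take b (drop a L).
Proof.
move=> hp hs; rewrite -nth_drop -(nth_take x0 hp); apply: mem_nth.
rewrite size_take size_drop; case: ifP; lia.
Qed.

Section Blk.
Variables (k l n : nat).
Local Notation q := (qpar k l).
Lemma mem_block (s : {perm 'I_n}) i y : 0 < q ->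
  y \in block k l s i -> (s^-1)%g y %/ q = i.
Proof.
move=> q0; rewrite /block /perm_seq -map_drop -map_take => /mapP [x hx ->].
rewrite permK.
have : val x \in map val (take q (drop (i * q) (enum 'I_n))) by apply: map_f.
rewrite map_take map_drop val_enum_ord drop_iota take_iota mem_iota.
move=> /andP [h1 h2].
have h3 : val x < i * q + q by lia.
apply/eqP; rewrite eqn_leq -ltnS ltn_divLR // leq_divRL //.
apply/andP; split.
all: move: h1 h3 => /= h1 h3; lia.
Qed.

Lemma size_block (s : {perm 'I_n}) i : i * q + q <= n -> size (block k l s i) = q.
Proof. move=> h; rewrite /block /perm_seq size_take size_drop size_map size_enum_ord; case: ifP; lia. Qed.

Lemma eseg_sub (s : {perm 'I_n}) i j m y : 0 < q ->
  y \in eseg k l (block k l s i) (block k l s j) m ->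
  ((s^-1)%g y %/ q == i) || ((s^-1)%g y %/ q == j).
Proof.
move=> q0; rewrite inE => /mem_take /mem_drop; rewrite mem_cat => /orP [] h.
  by rewrite (mem_block q0 h) eqxx.
by rewrite (mem_block q0 h) eqxx orbT.
Qed.

Lemma eseg_wit (s : {perm 'I_n}) i j m : 1 <= l -> 2 * l < k ->
  i * q + q <= n -> j * q + q <= n -> m < zpar k l ->
  (exists2 y, y \in eseg k l (block k l s i) (block k l s j) m & (s^-1)%g y %/ q = i) /\
  (exists2 y, y \in eseg k l (block k l s i) (block k l s j) m & (s^-1)%g y %/ q = j).
Proof.
move=> hl hk hi hj hm.
have [q0 qk kq hz] := qfacts hl hk.
have [hz1 hz2] := hz m hm.
have n0 : 0 < n by rewrite ?si ?sj; lia.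
pose x0 : 'I_n := Ordinal n0.
have si := size_block s hi; have sj := size_block s hj.
set v1 := block k l s i in si *; set v2 := block k l s j in sj *.
split.
  exists (nth x0 (v1 ++ v2) (m * l + 0)).
    rewrite inE; apply: take_drop_nth; rewrite ?size_cat; rewrite ?si ?sj; lia.
  rewrite nth_cat si addn0 hz2; apply: mem_block => //; apply: mem_nth; rewrite ?si ?sj; lia.
exists (nth x0 (v1 ++ v2) (m * l + k.-1)).
  rewrite inE; apply: take_drop_nth; rewrite ?size_cat; rewrite ?si ?sj; lia.
rewrite nth_cat si ifF; last by apply/negbTE; rewrite -leqNgt; rewrite ?si ?sj; lia.
apply: mem_block => //; apply: mem_nth; rewrite ?si ?sj; lia.
Qed.
End Blk.

Section Cond.
Variables (k l n : nat) (H : {set {set 'I_n}}).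
Local Notation q := (qpar k l).

Lemma ord_blk (i : 'I_(n %/ q)) : i * q + q <= n.
Proof.
have := ltn_ord i => hi.
have : i.+1 * q <= n %/ q * q by rewrite leq_mul2r hi orbT.
have := leq_divM n q; lia.
Qed.

Lemma owned_inv (s : {perm 'I_n}) (i j : 'I_(n %/ q)) x : x \in @owned k l n H s i j ->
  i != j /\ exists m : 'I_(zpar k l), x = eseg k l (block k l s i) (block k l s j) m.
Proof.
rewrite /owned; case: ifP => [ha|]; last by rewrite inE.
move=> /imsetP [m _ ->]; split; last by exists m.
by move: ha; rewrite /Defs.arc => /andP [].
Qed.

Lemma cond_blocks (s : {perm 'I_n}) S : 1 <= l -> 2 * l < k ->
  condensed k l H s S ->
  exists i j : 'I_(n %/ q), forall y, y \in S ->
    ((s^-1)%g y %/ q == i) || ((s^-1)%g y %/ q == j).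
Proof.
move=> hl hk.
have [q0 _ _ _] := qfacts hl hk.
case/existsP => e1 /andP [_ /existsP [e2 /andP [_ /and3P [_ /eqP -> hne]]]].
case/set0Pn: hne => f; rewrite inE => /andP [].
rewrite /phi => /bigcupP [[i1 j1] /= h1 hf1] /bigcupP [[i2 j2] /= h2 hf2].
have [ne1 [m1 ef1]] := owned_inv hf1.
have [_ [m2 ef2]] := owned_inv hf2.
have [_ [m3 ee1]] := owned_inv h1.
have [_ [m4 ee2]] := owned_inv h2.
have [[yi hyi ei] [yj hyj ej]] :=
  @eseg_wit k l n s i1 j1 m1 hl hk (ord_blk i1) (ord_blk j1) (ltn_ord m1).
rewrite -ef1 ef2 in hyi hyj.
have hi := eseg_sub q0 hyi; have hj := eseg_sub q0 hyj.
rewrite ei in hi; rewrite ej in hj.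
exists i1, j1 => y; rewrite inE => /orP [].
  by rewrite ee1 => /(eseg_sub q0).
rewrite ee2 => /(eseg_sub q0).
move: ne1 hi hj; set u := (s^-1)%g y %/ q.
move=> /negP ne1; move: ne1.
case: i1 j1 i2 j2 {ei ej ef1 ef2 h1 h2 hf1 hf2 ee1 ee2 hyi hyj} => [a ?] [b ?] [c ?] [d ?] /=.
move=> ne; have {ne} ne : a != b by apply/negP.
lia.
Qed.
End Cond.

Lemma perm_sets (T : finType) (S S' : {set T}) : #|S| = #|S'| ->
  exists tau : {perm T}, tau @: S = S'.
Proof.
move=> hc; move: {2}#|S :\: S'| (erefl #|S :\: S'|) => d.
elim: d S hc => [|d IH] S hc hd.
  have sub : S \subset S' by rewrite -setD_eq0 -cards_eq0 hd.
  have e : S = S' by apply/eqP; rewrite eqEcard sub hc leqnn.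
  exists 1%g; rewrite e -[RHS]imset_id; apply: eq_imset => x; rewrite perm1.
  done.
have [x hx] : exists x, x \in S :\: S' by apply/card_gt0P; rewrite hd.
have hd' : #|S' :\: S| = d.+1 by rewrite cardsD setIC -hc -cardsD.
have [y hy] : exists y, y \in S' :\: S by apply/card_gt0P; rewrite hd'.
set t := tperm x y.
have memt : forall z, (z \in t @: S) = (t z \in S).
  by move=> z; rewrite (can2_imset_pre _ (tpermK x y) (tpermK x y)) inE.
move: hx hy; rewrite !inE => /andP [xS' xS] /andP [yS yS'].
have e1 : (t @: S) :\: S' = (S :\: S') :\ x.
  apply/setP => z; rewrite !inE memt /t.
  case: tpermP => [->|->|zx zy].
    by rewrite eqxx (negbTE yS) andbF.
    by rewrite yS' andbF.
  by have -> : (z == x) = false by apply/eqP.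
have hc1 : #|t @: S| = #|S'| by rewrite card_imset //; apply: perm_inj.
have hd1 : #|(t @: S) :\: S'| = d.
  have := cardsD1 x (S :\: S'); rewrite hd inE xS xS' e1 /=; lia.
have [tau1 htau] := IH _ hc1 hd1.
exists (t * tau1)%g; rewrite -htau -imset_comp; apply: eq_imset => z.
by rewrite permM.
Qed.

Section Count.
Variables (n : nat) (P : {set 'I_n}).
Definition cnt (S : {set 'I_n}) := #|[set s : {perm 'I_n} | (s^-1)%g @: S \subset P]|.

Lemma cnt_eq (S S' : {set 'I_n}) : #|S| = #|S'| -> cnt S = cnt S'.
Proof.
move=> hc; have [tau htau] := perm_sets hc.
rewrite /cnt.
have -> : [set s : {perm 'I_n} | (s^-1)%g @: S' \subset P] =
   (fun s => s * tau^-1)%g @^-1: [set s : {perm 'I_n} | (s^-1)%g @: S \subset P].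
  apply/setP => s; rewrite !inE.
  have -> : ((s * tau^-1)^-1)%g @: S = (s^-1)%g @: S'.
    by rewrite -htau -imset_comp; apply: eq_imset => x; rewrite invMg invgK permM.
  done.
by rewrite card_preimset //; apply: mulIg.
Qed.

Lemma cond_iff (s : {perm 'I_n}) (A : {set 'I_n}) : ((s^-1)%g @: A \subset P) = (A \subset s @: P).
Proof.
rewrite (can2_imset_pre _ (permK s) (permKV s)).
apply/subsetP/subsetP => h x.
  by move=> xA; rewrite inE; apply: h; apply: imset_f.
by move=> /imsetP [y yA ->]; have := h y yA; rewrite inE.
Qed.

Lemma cnt_formula (S : {set 'I_n}) : cnt S * 'C(n, #|S|) = n`! * 'C(#|P|, #|S|).
Proof.
set m := #|S|.
have -> : 'C(n, m) = #|[set A : {set 'I_n} | #|A| == m]| by rewrite card_draws card_ord.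
rewrite mulnC -sum_nat_const.
rewrite (eq_bigr (fun A => cnt A)); last first.
  by move=> A; rewrite inE => /eqP hA; apply: cnt_eq; rewrite hA.
rewrite /cnt.
under eq_bigr => A _ do rewrite -sum1dep_card big_mkcond /=.
rewrite big_mkcond /=.
rewrite (eq_bigr (fun A => \sum_(s : {perm 'I_n}) (if (A \in [set A : {set 'I_n} | #|A| == m]) && ((s^-1)%g @: A \subset P) then 1 else 0))); last first.
  by move=> A _; case: (A \in _) => /=; last by rewrite big1.
set F := fun (A : {set 'I_n}) (s : {perm 'I_n}) => (if (A \in [set A : {set 'I_n} | #|A| == m]) && ((s^-1)%g @: A \subset P) then 1 else 0).
have ex : \sum_(A : {set 'I_n}) \sum_(s : {perm 'I_n}) F A s = \sum_(s : {perm 'I_n}) \sum_(A : {set 'I_n}) F A s.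
  exact: exchange_big.
rewrite ex.
transitivity (\sum_(s : {perm 'I_n}) 'C(#|P|, m)); last first.
  by rewrite sum_nat_const -card_Sn.
apply eq_bigr; intros s _.
rewrite -(card_imset P (@perm_inj _ s)) -cards_draws -sum1dep_card [RHS]big_mkcond /=.
apply: eq_bigr => A _; rewrite /F inE cond_iff.
by case: (_ \subset _); case: (#|A| == m).
Qed.
End Count.

Lemma card_bigcup_le (I T : finType) (P : pred I) (F : I -> {set T}) :
  #|\bigcup_(i | P i) F i| <= \sum_(i | P i) #|F i|.
Proof.
apply: (big_ind2 (fun (U : {set T}) (x : nat) => is_true (#|U| <= x))) => //.
  by rewrite cards0.
move=> U1 x1 U2 x2 h1 h2; apply: leq_trans (leq_card_setU _ _) _.
exact: leq_add.
Qed.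

Lemma card_fam (T : finType) (r : nat) (A : {set T}) (I : {set 'I_r}) :
  #|[set sg : {ffun 'I_r -> T} | [forall i in I, sg i \in A]]| =
  #|A| ^ #|I| * #|T| ^ (r - #|I|).
Proof.
pose F := fun i : 'I_r => if i \in I then mem A else mem (T : {pred T}).
have -> : #|[set sg : {ffun 'I_r -> T} | [forall i in I, sg i \in A]]| = #|family F|.
  apply: eq_card => sg; rewrite inE.
  apply/forall_inP/familyP => h i; rewrite /F.
    by case: ifP => hi; [apply: h | ].
  by move=> hi; have := h i; rewrite /F hi.
rewrite card_family.
have -> : foldr muln 1 [seq #|F x| | x : 'I_r] = \prod_(x : 'I_r) #|F x|.
  by rewrite foldrE big_map big_enum /=.
rewrite (bigID (fun x => x \in I)) /=.
rewrite (eq_bigr (fun _ => #|A|)); last by move=> i hi; rewrite /F hi.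
rewrite [X in _ * X](eq_bigr (fun _ => #|T|)); last first.
  by move=> i hi; rewrite /F (negbTE hi) cardT enumT.
rewrite !prod_nat_const.
have := cardsC I.
have -> : #|[pred x | x \notin I]| = #|~: I| by apply: eq_card => x; rewrite !inE.
move=> h; rewrite card_ord in h.
have e : #|~: I| = r - #|I| by move: h; set a := #|~: I|; set b := #|I|; lia.
by rewrite e.
Qed.

Lemma fam_bound (T : finType) (r M : nat) (A : {set T}) :
  #|[set sg : {ffun 'I_r -> T} | M <= #|[set i | sg i \in A]|]| * #|T| ^ M <=
  'C(r, M) * #|A| ^ M * #|T| ^ r.
Proof.
set B := [set sg : {ffun 'I_r -> T} | _].
have sub : B \subset \bigcup_(I : {set 'I_r} | #|I| == M)
    [set sg : {ffun 'I_r -> T} | [forall i in I, sg i \in A]].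
  apply/subsetP => sg; rewrite inE => hM.
  set J := [set i | sg i \in A] in hM.
  apply/bigcupP; exists [set x in take M (enum J)].
    have u : uniq (take M (enum J)) by apply: take_uniq; apply: enum_uniq.
    rewrite cardsE; move/card_uniqP: u => ->.
    by rewrite size_take -cardE; case: ifP => h; apply/eqP; lia.
  rewrite inE; apply/forall_inP => i; rewrite inE => /mem_take.
  by rewrite mem_enum inE.
have h1 : #|B| <= 'C(r, M) * (#|A| ^ M * #|T| ^ (r - M)).
  apply: leq_trans (subset_leq_card sub) _.
  apply: leq_trans (card_bigcup_le _ _) _.
  rewrite (eq_bigr (fun _ => #|A| ^ M * #|T| ^ (r - M))); last first.
    by move=> I /eqP hI; rewrite card_fam hI.
  rewrite sum_nat_const.
  have -> : #|[pred I : {set 'I_r} | #|I| == M]| = 'C(r, M).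
    by rewrite -cardsE card_draws card_ord.
  done.
case: (leqP M r) => hMr.
  apply: leq_trans (leq_mul h1 (leqnn _)) _.
  by rewrite -!mulnA -expnD subnK.
move: h1; rewrite bin_small // mul0n leqn0 => /eqP ->.
by rewrite mul0n.
Qed.

Lemma expn_mono a b e : a <= b -> a ^ e <= b ^ e.
Proof. by move=> h; elim: e => // e IH; rewrite !expnS leq_mul. Qed.

Lemma ffact_le_exp a b : a ^_ b <= a ^ b.
Proof.
elim: b a => [|b IH] a; first by [].
rewrite ffactnS expnS leq_mul //; apply: leq_trans (IH _) _.
by apply: expn_mono; lia.
Qed.

Lemma bin_le_exp a b : 'C(a, b) <= a ^ b.
Proof.
apply: leq_trans (ffact_le_exp a b); rewrite -bin_ffact.
by rewrite leq_pmulr // fact_gt0.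
Qed.

Lemma sub_exp_le_ffact n m : (n - m) ^ m <= n ^_ m.
Proof.
elim: m n => [|m IH] n; first by [].
rewrite ffactnS expnS leq_mul //; first by lia.
apply: leq_trans (IH _); apply: expn_mono; lia.
Qed.

Lemma fact_le_exp m : m`! <= m ^ m.
Proof.
elim: m => [|m IH]; first by [].
rewrite factS expnS leq_mul //; apply: leq_trans IH _; apply: expn_mono; lia.
Qed.

Lemma bin_lower n m : 2 * m <= n -> n ^ m <= 'C(n, m) * (2 * m) ^ m.
Proof.
move=> h.
have h1 : n ^ m <= (2 * (n - m)) ^ m by apply: expn_mono; lia.
apply: leq_trans h1 _.
rewrite !expnMn mulnCA leq_mul //.
apply: leq_trans (sub_exp_le_ffact n m) _.
by rewrite -bin_ffact leq_mul // fact_le_exp.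
Qed.

Lemma nat_chain (b a C F N Q W Crm r n K M Fr m: nat) :
  b * F ^ M <= Crm * a ^ M * Fr ->
  a * C <= N * N * (F * Q) ->
  n ^ m <= C * W ->
  Crm <= r ^ M -> N <= n -> Q ^ M * W ^ M <= K -> 0 < F ->
  b * n ^ (m * M) <= r ^ M * n ^ (2 * M) * K * Fr.
Proof.
move=> h1 h2 h3 h4 h5 h6 hF.
have e1 : n ^ (m * M) <= C ^ M * W ^ M.
  by rewrite expnM -expnMn; apply: expn_mono.
have e2 : a ^ M * C ^ M <= N ^ M * N ^ M * F ^ M * Q ^ M.
  by rewrite -!expnMn; apply: expn_mono; lia.
have e5 : N ^ M <= n ^ M by apply: expn_mono.
have hFM : 0 < F ^ M by rewrite expn_gt0 hF.
move: e1 e2 e5 hFM h1 h4 h6; rewrite mul2n -addnn expnD.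
set bb := b; set cM := C ^ M; set wM := W ^ M; set aM := a ^ M; set nM := N ^ M.
set fM := F ^ M; set qM := Q ^ M; set rM := r ^ M; set mM := n ^ M; set X := n ^ (m * M).
move=> e1 e2 e5 hFM h1 h4 h6.
have e3 : bb * cM * fM <= rM * (nM * nM * fM * qM) * Fr.
  have : bb * fM * cM <= Crm * aM * Fr * cM by apply: leq_mul.
  have : aM * cM * (Crm * Fr) <= nM * nM * fM * qM * (rM * Fr) by apply: leq_mul => //; apply: leq_mul.
  nia.
have e4 : bb * cM <= rM * nM * nM * qM * Fr.
  rewrite -(leq_pmul2r hFM); nia.
have : bb * X <= bb * (cM * wM) by apply: leq_mul.
have : rM * nM * nM * qM * Fr * wM <= rM * mM * mM * (qM * wM) * Fr.
  have h : nM * nM <= mM * mM by apply: leq_mul.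
  have := leq_mul h (leqnn (rM * qM * Fr * wM)); lia.
have : rM * mM * mM * (qM * wM) * Fr <= rM * mM * mM * K * Fr.
  by apply: leq_mul => //; apply: leq_mul.
nia.
Qed.

Section Main.
Variables (k l n : nat) (H : {set {set 'I_n}}).
Local Notation q := (qpar k l).

Definition Pij (i j : nat) : {set 'I_n} := [set x : 'I_n | (x %/ q == i) || (x %/ q == j)].

Lemma card_Pi i : 0 < q -> #|[set x : 'I_n | x %/ q == i]| <= q.
Proof.
move=> q0.
pose f := fun x : 'I_n => Ordinal (ltn_pmod x q0).
have <- : #|f @: [set x : 'I_n | x %/ q == i]| = #|[set x : 'I_n | x %/ q == i]|.
  apply: card_in_imset => x y; rewrite !inE => /eqP hx /eqP hy /(congr1 val) /= e.
  apply/val_inj => /=; rewrite (divn_eq x q) (divn_eq y q) hx hy e //.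
by rewrite -[X in _ <= X]card_ord; apply: max_card.
Qed.

Lemma card_Pij i j : 0 < q -> #|Pij i j| <= 2 * q.
Proof.
move=> q0.
have -> : Pij i j = [set x : 'I_n | x %/ q == i] :|: [set x : 'I_n | x %/ q == j].
  by apply/setP => x; rewrite !inE.
apply: leq_trans (leq_card_setU _ _) _.
by rewrite mul2n -addnn leq_add //; apply: card_Pi.
Qed.

Definition condset (S : {set 'I_n}) := [set s : {perm 'I_n} | condensed k l H s S].

Lemma condset_bound (S : {set 'I_n}) : 1 <= l -> 2 * l < k ->
  #|condset S| * 'C(n, #|S|) <= (n %/ q) * (n %/ q) * (n`! * (2 * q) ^ #|S|).
Proof.
move=> hl hk.
have [q0 _ _ _] := qfacts hl hk.
have sub : condset S \subset \bigcup_(p : 'I_(n %/ q) * 'I_(n %/ q))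
     [set s : {perm 'I_n} | (s^-1)%g @: S \subset Pij p.1 p.2].
  apply/subsetP => s; rewrite inE => /(cond_blocks hl hk) [i [j h]].
  apply/bigcupP; exists (i, j) => //; rewrite inE.
  apply/subsetP => x /imsetP [y yS ->]; rewrite inE; exact: h.
apply: leq_trans (leq_mul (subset_leq_card sub) (leqnn _)) _.
apply: leq_trans (leq_mul (card_bigcup_le _ _) (leqnn _)) _.
rewrite big_distrl /=.
apply: (@leq_trans (\sum_(p : 'I_(n %/ q) * 'I_(n %/ q)) (n`! * (2 * q) ^ #|S|))).
  apply: leq_sum => p _.
  have := cnt_formula (Pij p.1 p.2) S; rewrite /cnt => ->.
  rewrite leq_mul2l; apply/orP; right.
  exact: leq_trans (leq_bin2l _ (card_Pij _ _ q0)) (bin_le_exp _ _).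
rewrite sum_nat_const; apply: leq_mul => //.
by apply: leq_trans (max_card _) _; rewrite card_prod !card_ord.
Qed.

Definition Mc := 4 * q + 2.
Definition Kc := (2 * q * (4 * q)) ^ (2 * q * Mc).

Lemma BS_bound (r : nat) (S : {set 'I_n}) : 1 <= l -> 2 * l < k ->
  2 * #|S| <= n -> #|S| <= 2 * q ->
  #|[set sg : {ffun 'I_r -> {perm 'I_n}} | Mc <= #|[set i | sg i \in condset S]|]|
    * n ^ (#|S| * Mc) <= r ^ Mc * n ^ (2 * Mc) * Kc * (n`!) ^ r.
Proof.
move=> hl hk hn hm.
have [q0 _ _ _] := qfacts hl hk.
have h1 := fam_bound r Mc (condset S); rewrite card_Sn in h1.
apply: (nat_chain h1 (condset_bound S hl hk) (bin_lower hn) (bin_le_exp _ _) (leq_div _ _)) => //;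
  last exact: fact_gt0.
rewrite -expnMn -expnMn -expnM /Kc.
apply: leq_trans (_ : (2 * q * (4 * q)) ^ (#|S| * Mc) <= _).
  apply: expn_mono; rewrite leq_mul //; lia.
apply: leq_pexp2l; first by nia.
by rewrite leq_mul2r hm orbT.
Qed.
End Main.

Section Final.
Variables (k l n : nat) (H : {set {set 'I_n}}) (r : nat).
Local Notation q := (qpar k l).
Local Notation M := (Mc k l).
Definition BS (S : {set 'I_n}) :=
  [set sg : {ffun 'I_r -> {perm 'I_n}} | M <= #|[set i | sg i \in condset k l H S]|].

Lemma t_bound m : 1 <= l -> 2 * l < k -> 2 * m <= n -> m <= 2 * q ->
  n * (\sum_(S : {set 'I_n} | #|S| == m) #|BS S|) * n ^ (m * M) <=
  n ^ (m + 1) * r ^ M * n ^ (2 * M) * Kc k l * n`! ^ r.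
Proof.
move=> hl hk hn hm.
set R0 := r ^ M * n ^ (2 * M) * Kc k l * n`! ^ r.
have h1 : (\sum_(S : {set 'I_n} | #|S| == m) #|BS S|) * n ^ (m * M) <= 'C(n, m) * R0.
  rewrite big_distrl /=.
  apply: leq_trans (_ : \sum_(S : {set 'I_n} | #|S| == m) R0 <= _).
    apply: leq_sum => S /eqP hS; rewrite /BS -hS.
    by apply: BS_bound => //; rewrite hS.
  by rewrite sum_nat_const -cardsE card_draws card_ord.
have h2 := bin_le_exp n m.
rewrite -mulnA expnD expn1.
have := leq_mul (leqnn n) (leq_trans h1 (leq_mul h2 (leqnn R0))).
rewrite /R0; lia.
Qed.

Lemma bad_bound : 1 <= l -> 2 * l < k ->
  #|[set sg : {ffun 'I_r -> {perm 'I_n}} | bad k l H sg]| <=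
  \sum_(t : 'I_(2 * q - k).+1 | 1 <= t) \sum_(S : {set 'I_n} | #|S| == k + t) #|BS S|.
Proof.
move=> hl hk.
have sub : [set sg : {ffun 'I_r -> {perm 'I_n}} | bad k l H sg] \subset
   \bigcup_(t : 'I_(2 * q - k).+1 | 1 <= t) \bigcup_(S : {set 'I_n} | #|S| == k + t) BS S.
  apply/subsetP => sg; rewrite inE => /existsP [t /existsP [S /and3P [t1 hS hc]]].
  apply/bigcupP; exists t => //; apply/bigcupP; exists S => //.
  rewrite inE.
  have -> : [set i | sg i \in condset k l H S] = [set i | condensed k l H (sg i) S].
    by apply/setP => i; rewrite !inE.
  rewrite /Mc; move: hc; set c := #|_|; lia.
apply: leq_trans (subset_leq_card sub) _.
apply: leq_trans (card_bigcup_le _ _) _.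
apply: leq_sum => t _; exact: card_bigcup_le.
Qed.
End Final.

Import Order.TTheory GRing.Theory Num.Theory.
Local Open Scope ring_scope.

Lemma real_step (R : realFieldType) (X x rho d K Fr : R) (m k q : nat) :
  1 <= x -> 0 <= rho -> 0 <= d -> d <= 1 -> 0 <= K -> 0 <= Fr ->
  (3 <= k)%N -> (k + 1 <= m)%N -> (m <= 2 * q)%N ->
  rho ^+ 2 <= d * x ^+ (2 * k - 3) ->
  X * x ^+ (m * (4 * q + 2)) <=
    x ^+ (m + 1) * rho ^+ (4 * q + 2) * x ^+ (2 * (4 * q + 2)) * K * Fr ->
  X <= d * K * Fr.
Proof.
move=> x1 r0 d0 d1 K0 F0 hk hm1 hm2 hr h.
have x0 : 0 < x by apply: lt_le_trans x1.
have hx : 0 < x ^+ (m * (4 * q + 2)) by apply: exprn_gt0.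
have e1 : rho ^+ (4 * q + 2) <= d ^+ (2 * q + 1) * x ^+ ((2 * k - 3) * (2 * q + 1)).
  have -> : (4 * q + 2 = 2 * (2 * q + 1))%N by lia.
  rewrite exprM [X in _ * X]exprM -exprMn.
  apply: lerXn2r => //; rewrite nnegrE ?sqr_ge0 //.
  by rewrite mulr_ge0 // exprn_ge0 // ltW.
have e2 : d ^+ (2 * q + 1) <= d by rewrite ler_iXnr // addn1.
have e3 : x ^+ (m + 1) * x ^+ ((2 * k - 3) * (2 * q + 1)) * x ^+ (2 * (4 * q + 2))
    <= x ^+ (m * (4 * q + 2)).
  rewrite -!exprD; apply: ler_weXn2l => //; nia.
set xM := x ^+ (m * (4 * q + 2)) in hx h e3 *.
set A := x ^+ (m + 1) in e3 *; set B := x ^+ ((2 * k - 3) * (2 * q + 1)) in e1 e3 *.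
set C := x ^+ (2 * (4 * q + 2)) in e3 h *.
set D := d ^+ (2 * q + 1) in e1 e2 *; set E := rho ^+ (4 * q + 2) in e1 h *.
have A0 : 0 <= A by rewrite exprn_ge0 // ltW.
have B0 : 0 <= B by rewrite exprn_ge0 // ltW.
have C0 : 0 <= C by rewrite exprn_ge0 // ltW.
have D0 : 0 <= D by rewrite exprn_ge0.
have h2 : A * E * C * K * Fr <= A * (D * B) * C * K * Fr.
  by do 3 (apply: ler_wpM2r => //); apply: ler_wpM2l.
have h3 : A * (D * B) * C * K * Fr = (D * K * Fr) * (A * B * C) by ring.
have h4 : (D * K * Fr) * (A * B * C) <= (d * K * Fr) * xM.
  apply: ler_pM => //; first by rewrite !mulr_ge0.
    by rewrite !mulr_ge0.
  by do 2 (apply: ler_wpM2r => //).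
have : X * xM <= (d * K * Fr) * xM.
  by apply: le_trans h _; rewrite (le_trans h2) // h3.
by rewrite ler_pM2r.
Qed.


Lemma cast_ht (R : realType) (n rn Sig FF KK e1 e2 e3 e4 : nat) :
  (n * Sig * n ^ e1 <= n ^ e2 * rn ^ e3 * n ^ e4 * KK * FF)%N ->
  (n%:R : R) * Sig%:R * n%:R ^+ e1 <= n%:R ^+ e2 * rn%:R ^+ e3 * n%:R ^+ e4 * KK%:R * FF%:R.
Proof. by rewrite -(ler_nat R) !natrM !natrX. Qed.

Theorem lemma7 (R : realType) (k l : nat) (hl1 : (1 <= l)%N) (hlk : (2 * l < k)%N)
  (H : forall n : nat, {set {set 'I_n}})
  (Hk : forall n : nat, kgraph k (H n))
  (r : nat -> nat)
  (hr : forall eps : R, 0 < eps -> exists N : nat, forall n : nat, (N <= n)%N ->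
          (r n)%:R <= eps * ((n%:R : R) ^+ (k - 2) * Num.sqrt (n%:R : R))) :
  forall eps : R, 0 < eps -> exists N : nat, forall n : nat, (N <= n)%N ->
    (qpar k l %| n)%N ->
    (n%:R : R) * prob_bad R k l (H n) (r n) <= eps.
Proof.
move=> eps eps0.
have [q0 qk kq _] := qfacts hl1 hlk.
have k3 : (3 <= k)%N by lia.
have K0 : (0 < Kc k l)%N by rewrite /Kc expn_gt0; apply/orP; left; nia.
set c : R := ((2 * qpar k l - k).+1 * Kc k l)%:R.
have c0 : 0 < c by rewrite ltr0n muln_gt0 K0.
set e' : R := Num.min 1 (eps / c).
have e'0 : 0 < e' by rewrite lt_min ltr01 divr_gt0.
have e'1 : e' <= 1 by rewrite ge_min lexx.
have e'c : e' <= eps / c by rewrite ge_min lexx orbT.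
have [N0 hN0] := hr e' e'0.
exists (N0 + 4 * qpar k l + 1)%N => n hn hqn.
have hrn := hN0 n (leq_trans (leq_addr _ _) (leq_trans (leq_addr _ _) hn)).
set x : R := n%:R in hrn *.
have x0 : 0 <= x by rewrite ler0n.
have x1 : 1 <= x by rewrite /x ler1n; lia.
set rn := r n in hrn *.
set d := e' ^+ 2.
have hr2 : (rn%:R : R) ^+ 2 <= d * x ^+ (2 * k - 3).
  have h2 : (rn%:R : R) ^+ 2 <= (e' * (x ^+ (k - 2) * Num.sqrt x)) ^+ 2.
    apply: lerXn2r => //; rewrite nnegrE ?ler0n //.
    apply: mulr_ge0; first exact: ltW.
    by apply: mulr_ge0; [apply: exprn_ge0 | apply: sqrtr_ge0].
  apply: le_trans h2 _.
  rewrite !exprMn sqr_sqrtr // -exprM -exprSr.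
  by have -> : ((k - 2) * 2).+1 = (2 * k - 3)%N by lia.
have e'0' : 0 <= e' by exact: ltW.
have d0 : 0 <= d by rewrite exprn_ge0.
have d1 : d <= 1 by rewrite exprn_ile1.
have de : d <= e' by rewrite ler_iXnr.
rewrite /prob_bad card_ffun card_Sn card_ord.
set Fr : R := ((n`! ^ rn)%N)%:R.
have F0 : 0 < Fr by rewrite ltr0n expn_gt0 fact_gt0.
rewrite mulrA ler_pdivrMr //.
have hb := bad_bound (k:=k) (l:=l) (H n) rn hl1 hlk.
rewrite -(ler_nat R) in hb.
apply: le_trans (ler_wpM2l x0 hb) _.
rewrite natr_sum mulr_sumr.
apply: le_trans (_ : \sum_(t < (2 * qpar k l - k).+1 | (0 < t)%N)
   (d * (Kc k l)%:R * Fr) <= _).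
  apply: ler_sum => t t1.
  have tq := ltn_ord t.
  have ht := t_bound (H n) rn (m := k + t) hl1 hlk.
  have ta : (nat_of_ord t <= 2 * qpar k l - k /\ 0 < nat_of_ord t)%N by split.
  have [hmq h2m] : ((k + t <= 2 * qpar k l) /\ (2 * (k + t) <= n))%N.
    move: ta hn; move: (nat_of_ord t) => a; move: (qpar k l) => b; clear; lia.
  have {ht} ht := ht h2m hmq.
  have {ht} ht := cast_ht R ht; rewrite /Mc in ht.
  have hkm : (k + 1 <= k + t)%N by rewrite leq_add2l.
  exact: (real_step x1 (ler0n _ _) d0 d1 (ler0n _ _) (ltW F0) k3 hkm hmq hr2 ht).
have z0 : 0 <= d * (Kc k l)%:R * Fr by rewrite !mulr_ge0 // ltW.
apply: le_trans (_ : \sum_(t < (2 * qpar k l - k).+1) (d * (Kc k l)%:R * Fr) <= _).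
  rewrite [X in _ <= X](bigID (fun t : 'I_(2 * qpar k l - k).+1 => (0 < t)%N)) /=.
  by rewrite lerDl sumr_ge0.
rewrite sumr_const card_ord -[X in X <= _]mulr_natr.
have dc : d * c <= eps by rewrite -ler_pdivlMr // (le_trans de e'c).
have -> : d * (Kc k l)%:R * Fr * ((2 * qpar k l - k).+1)%:R = (d * c) * Fr.
  by rewrite /c natrM; ring.
by rewrite ler_wpM2r // ltW.
Qed.
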